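(* Let $H$ be a monoid, let $a,c\in H$ and $b,d\in\mathrm{Gpr}\,H$ be such that for every $e\in\mathrm{Gpr}\,H$: if $e\mid ab$ then $e\mid b$, and if $e\mid cd$ then $e\mid d$. If $ab\sim cd$, then $a\sim c$ and $b\sim d$.
   Context: A monoid means a commutative cancellative monoid (written multiplicatively); $H^{\ast}$ is its unit group. $x\sim y$ means $x=uy$ for some $u\in H^{\ast}$. $\mathrm{Gpr}\,H$ is the set of radical generators of $H$: elements $r$ such that for all $b\in H$, $n\in\mathbb{N}$, $r\mid b^n$ implies $r\mid b$. *)

(* Defs.v *)
From Stdlib Require Import Arith.

Record CCMonoid := {
  carrier :> Type;
  mul : carrier -> carrier -> carrier;
  one : carrier;
  mul_assoc : forall x y z, mul x (mul y z) = mul (mul x y) z;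
  mul_comm : forall x y, mul x y = mul y x;
  mul_one : forall x, mul x one = x;
  mul_cancel : forall x y z, mul x y = mul x z -> y = z
}.

Arguments mul {c} x y.
Arguments one {c}.

Definition divides {H : CCMonoid} (x y : H) : Prop := exists z : H, y = mul x z.

Definition is_unit {H : CCMonoid} (u : H) : Prop := exists v : H, mul u v = one.

Definition assoc {H : CCMonoid} (x y : H) : Prop :=
  exists u : H, is_unit u /\ x = mul u y.

Fixpoint pow {H : CCMonoid} (b : H) (n : nat) : H :=
  match n with
  | 0 => one
  | S n => mul b (pow b n)
  end.

Definition Gpr {H : CCMonoid} (r : H) : Prop :=
  forall (b : H) (n : nat), 1 <= n -> divides r (pow b n) -> divides r b.

(* Main.v *)
Require Import Defs.

Lemma mlca (H : CCMonoid) (x y z : H) : mul x (mul y z) = mul y (mul x z).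
Proof. rewrite (mul_assoc H), (mul_comm H x y), <- (mul_assoc H). reflexivity. Qed.

Lemma one_l (H : CCMonoid) (x : H) : mul one x = x.
Proof. rewrite (mul_comm H). apply mul_one. Qed.

Theorem proposition5p1 (H : CCMonoid) (a b c d : H) :
  Gpr b -> Gpr d ->
  (forall e : H, Gpr e ->
     (divides e (mul a b) -> divides e b) /\ (divides e (mul c d) -> divides e d)) ->
  assoc (mul a b) (mul c d) ->
  assoc a c /\ assoc b d.
Proof.
  intros Gb Gd Hyp [u [[v Huv] Hab]].
  assert (Hcd : mul c d = mul v (mul a b)).
  { rewrite Hab, (mul_assoc H), (mul_comm H v u), Huv, one_l. reflexivity. }
  assert (Hbd : divides b d).
  { apply (proj2 (Hyp b Gb)). exists (mul a v).
    rewrite Hcd, (mul_comm H a b), mlca, (mul_comm H v a). reflexivity. }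
  assert (Hdb : divides d b).
  { apply (proj1 (Hyp d Gd)). exists (mul u c).
    rewrite Hab, (mul_comm H c d), mlca. reflexivity. }
  destruct Hdb as [x Hx]. destruct Hbd as [y Hy].
  assert (Hyx : mul y x = one).
  { symmetry. apply (mul_cancel H b). rewrite mul_one, (mul_assoc H), <- Hy. exact Hx. }
  assert (Hax : mul a x = mul u c).
  { apply (mul_cancel H d).
    rewrite mlca, <- Hx, Hab, (mul_comm H c d), mlca. reflexivity. }
  split.
  - exists (mul u y). split.
    + exists (mul v x). rewrite (mul_assoc H), (mul_comm H (mul u y) v), (mul_assoc H), (mul_comm H v u), Huv,
        one_l, Hyx. reflexivity.
    + rewrite <- (mul_one H a) at 1. rewrite (mul_comm H y x) in Hyx.
      rewrite <- Hyx, (mul_assoc H), Hax, <- (mul_assoc H), (mul_comm H c y), (mul_assoc H). reflexivity.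
  - exists x. split.
    + exists y. rewrite (mul_comm H). exact Hyx.
    + rewrite Hx, (mul_comm H). reflexivity.
Qed.
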